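(* Let $\varphi\colon\mathbb{R}\to[0,\infty)$ be a deformed exponential and $\{u_{0,i}\}_{i\ge1}\subset(0,\infty)$. Suppose there do not exist $\alpha\in(0,1)$, $\varepsilon>0$ and a sequence $\{c_i\}\subseteq\mathbb{R}\cup\{-\infty\}$ with $\sum_{i}\varphi(c_i)<\infty$ such that for every $i$, $\alpha\varphi(u)\le\varphi(u-u_{0,i})$ for all real $u>c_i$ with $\varphi(u-u_{0,i})<\varepsilon$. Then there exist pairwise disjoint sets $A_n\subseteq\mathbb{N}$ ($n\ge1$) and real numbers $c_{n,i}$ ($n\ge1$, $i\in A_n$) such that for each $n\ge1$ \[ \frac12\le\sum_{i\in A_n}\varphi(c_{n,i})\qquad\text{and}\qquad\sum_{i\in A_n}\varphi(c_{n,i}-u_{0,i})\le 2^{-n}. \] *)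

(* Defs.v *)
From Stdlib Require Import Reals.
From Coquelicot Require Import Coquelicot.
Open Scope R_scope.

Definition deformed_exp (phi : R -> R) : Prop :=
  (forall u, 0 <= phi u) /\
  (forall x y t, 0 <= t <= 1 ->
     phi (t * x + (1 - t) * y) <= t * phi x + (1 - t) * phi y) /\
  is_lim phi m_infty 0 /\
  is_lim phi p_infty p_infty.

(* Sum of a (nonnegative) series, as an extended real: the limit of the
   partial sums (which for nonnegative terms is their supremum). *)
Definition nnsum (f : nat -> R) : Rbar := Lim_seq (fun N => sum_n f N).

(* Elements of R \cup {-oo}: None stands for -oo. *)
Definition phi_ext (phi : R -> R) (c : option R) : R :=
  match c with None => 0 | Some x => phi x end.

Definition above (c : option R) (u : R) : Prop :=
  match c with None => True | Some x => x < u end.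

(* Main.v *)
Require Import Defs.
From Stdlib Require Import Reals Lra Lia Arith Bool Classical ClassicalEpsilon.
From Coquelicot Require Import Coquelicot.
Open Scope R_scope.

Fixpoint ssum (f : nat -> R) (N : nat) : R :=
  match N with O => 0 | S k => ssum f k + f k end.

Lemma sum_n_ssum f N : sum_n f N = ssum f (S N).
Proof.
  induction N as [|N IH].
  - rewrite sum_O; simpl; lra.
  - rewrite sum_Sn, IH. simpl. unfold plus; simpl. lra.
Qed.

Lemma ssum_ext f g N : (forall i, (i < N)%nat -> f i = g i) -> ssum f N = ssum g N.
Proof.
  induction N; intros H; simpl; auto.
  rewrite IHN; [rewrite (H N) | intros; apply H]; auto; lia.
Qed.

Lemma ssum_nonneg f N : (forall i, 0 <= f i) -> 0 <= ssum f N.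
Proof. induction N; intros H; simpl; [lra| specialize (IHN H); specialize (H N); lra]. Qed.

Lemma ssum_le f g N : (forall i, (i < N)%nat -> f i <= g i) -> ssum f N <= ssum g N.
Proof.
  induction N; intros H; simpl; [lra|].
  assert (ssum f N <= ssum g N) by (apply IHN; intros; apply H; lia).
  specialize (H N); assert (f N <= g N) by (apply H; lia). lra.
Qed.

Lemma ssum_scal f c N : ssum (fun i => c * f i) N = c * ssum f N.
Proof. induction N; simpl; [ring| rewrite IHN; ring]. Qed.

Lemma ssum_delta f g d N : (forall i, (i < N)%nat -> g i - d <= f i) ->
  ssum g N - INR N * d <= ssum f N.
Proof.
  induction N; intros H; [simpl; lra|]. change (ssum g (S N)) with (ssum g N + g N).
  change (ssum f (S N)) with (ssum f N + f N).
  assert (ssum g N - INR N * d <= ssum f N) by (apply IHN; intros; apply H; lia).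
  assert (g N - d <= f N) by (apply H; lia). rewrite S_INR. lra.
Qed.

Lemma ssum_mono f N M : (forall i, 0 <= f i) -> (N <= M)%nat -> ssum f N <= ssum f M.
Proof.
  intros H; induction 1; [lra|]. simpl. specialize (H m); lra.
Qed.

Lemma ssum_trunc f K N : (forall i, 0 <= f i) -> (forall i, (K <= i)%nat -> f i = 0) ->
  ssum f N <= ssum f K.
Proof.
  intros H0 H. destruct (le_lt_dec N K). apply ssum_mono; auto.
  assert (forall M, ssum f (K + M) = ssum f K).
  { induction M; simpl. rewrite Nat.add_0_r; auto. rewrite Nat.add_succ_r; simpl.
    rewrite IHM, H; [lra| lia]. }
  replace N with (K + (N - K))%nat by lia. rewrite H1. lra.
Qed.

Lemma ssum_zero f N : (forall i, (i < N)%nat -> f i = 0) -> ssum f N = 0.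
Proof. intros H. rewrite (ssum_ext f (fun _ => 0)); auto. clear H; induction N; simpl; [lra|rewrite IHN; lra]. Qed.

Lemma nnsum_fin f N : (forall i, (N <= i)%nat -> f i = 0) -> nnsum f = Finite (ssum f N).
Proof.
  intros H. unfold nnsum. rewrite (Lim_seq_ext_loc _ (fun _ => ssum f N)).
  apply Lim_seq_const.
  exists N. intros n Hn. rewrite sum_n_ssum.
  replace (S n) with (N + (S n - N))%nat by lia. generalize (S n - N)%nat.
  induction n0; simpl. rewrite Nat.add_0_r; auto. rewrite Nat.add_succ_r; simpl.
  rewrite IHn0, H; [lra| lia].
Qed.

Lemma greedy (a : nat -> R) N : (forall i, 0 <= a i) -> (forall i, a i < 1/2) ->
  1/2 <= ssum a N -> exists K, 1/2 <= ssum a K < 1.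
Proof.
  intros H0 H1. induction N; simpl; intros H; [lra|].
  destruct (Rle_lt_dec (1/2) (ssum a N)) as [h|h]; auto.
  exists (S N); simpl. specialize (H1 N); lra.
Qed.


Lemma phi_mono phi (Hphi : deformed_exp phi) x y : x <= y -> phi x <= phi y.
Proof.
  pose proof Hphi as [Hnn [Hcv [Hm Hp]]].
  intros Hxy. destruct (Rle_lt_dec (phi x) (phi y)) as [h|h]; auto. exfalso.
  assert (Hxy' : x < y) by (destruct Hxy; auto; subst; lra).
  apply is_lim_spec in Hm. assert (Hpos : 0 < phi x - 0) by (specialize (Hnn y); lra).
  destruct (Hm (mkposreal _ Hpos)) as [m Hm']. simpl in Hm'.
  set (z := Rmin m x - 1).
  assert (Hz : Rabs (phi z - 0) < phi x - 0) by (apply Hm'; unfold z; pose proof (Rmin_l m x); lra).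
  rewrite Rminus_0_r in Hz. apply Rabs_def2 in Hz.
  assert (zx : z < x) by (unfold z; pose proof (Rmin_r m x); lra).
  set (l := (y - x) / (y - z)).
  assert (Hl : 0 <= l <= 1). { unfold l; split. apply Rdiv_le_0_compat; lra.
    apply Rmult_le_reg_r with (y - z); [lra|]. field_simplify; lra. }
  pose proof (Hcv z y l Hl).
  replace (l * z + (1 - l) * y) with x in H by (unfold l; field; lra).
  assert (0 < l) by (unfold l; apply Rdiv_lt_0_compat; lra). nra.
Qed.

Lemma phi_lc phi (Hphi : deformed_exp phi) s (E : R -> Prop) : is_lub E s -> forall d, 0 < d ->
  exists u, E u /\ phi s - d < phi u.
Proof.
  pose proof Hphi as [Hnn [Hcv [Hm Hp]]].
  intros [Hub Hl] d Hd.
  set (D := Rabs (phi (s + 1) - phi s)).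
  set (t := d / (D + 1)).
  assert (HD : 0 <= D) by apply Rabs_pos.
  assert (Ht : 0 < t) by (unfold t; apply Rdiv_lt_0_compat; lra).
  assert (HtD : t * D < d). { unfold t. apply Rmult_lt_reg_r with (D+1); [lra|].
    field_simplify; nra. }
  assert (exists u, E u /\ s - t < u) as [u [Eu Hu]].
  { apply NNPP; intros N. assert (s <= s - t); [|lra]. apply Hl. intros x Ex.
    apply Rnot_lt_le. intros h; apply N; eauto. }
  exists u; split; auto.
  pose proof (phi_mono phi Hphi (s - t) u ltac:(lra)).
  set (l := 1 / (1 + t)).
  assert (Hl1 : 0 <= l <= 1). { unfold l; split. apply Rdiv_le_0_compat; lra.
    apply Rmult_le_reg_r with (1 + t); [lra|]. field_simplify; lra. }
  pose proof (Hcv (s - t) (s + 1) l Hl1).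
  replace (l * (s - t) + (1 - l) * (s + 1)) with s in H0 by (unfold l; field; lra).
  assert (Hl2 : l * (1 + t) = 1) by (unfold l; field; lra).
  assert (phi (s+1) - phi s <= D) by apply Rle_abs.
  nra.
Qed.
Lemma ssum_add f g N : ssum (fun i => f i + g i) N = ssum f N + ssum g N.
Proof. induction N; simpl; [lra| rewrite IHN; lra]. Qed.

Lemma ssum_single (a : nat -> R) i :
  ssum (fun j => if Nat.eqb j i then a j else 0) (S i) = a i.
Proof.
  simpl. rewrite Nat.eqb_refl. rewrite ssum_zero; [lra|].
  intros j hj. destruct (Nat.eqb_spec j i); [lia| auto].
Qed.

Lemma main_step phi u0 (Hphi : deformed_exp phi)
  (Hno : ~ exists (alpha eps : R) (c : nat -> option R),
           0 < alpha < 1 /\ 0 < eps /\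
           Rbar_lt (nnsum (fun i => phi_ext phi (c i))) p_infty /\
           forall i u, above (c i) u -> phi (u - u0 i) < eps ->
             alpha * phi u <= phi (u - u0 i))
  (F : nat -> bool) NF beta :
  (forall i, F i = true -> (i < NF)%nat) -> 0 < beta < 1 ->
  exists (S : nat -> bool) N (c : nat -> R),
   (forall i, S i = true -> (i < N)%nat /\ F i = false) /\
   1/2 <= ssum (fun i => if S i then phi (c i) else 0) N /\
   ssum (fun i => if S i then phi (c i - u0 i) else 0) N <= beta.
Proof.
  intros HF Hb.
  pose proof Hphi as [Hnn [Hcv [Hm Hp]]].
  set (V := fun i u => F i = false /\ phi (u - u0 i) < beta /\ phi (u - u0 i) < beta * phi u).
  apply NNPP; intro NG.
  assert (NG2 : forall S N c, (forall i, S i = true -> (i < N)%nat /\ V i (c i)) ->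
     1/2 <= ssum (fun i => if S i then phi (c i) else 0) N <= 1 -> False).
  { intros S N c H1 H2. apply NG. exists S, N, c. split.
    { intros i h; destruct (H1 i h) as [a [b _]]; auto. }
    split; [lra|].
    apply Rle_trans with (ssum (fun i => beta * (if S i then phi (c i) else 0)) N).
    - apply ssum_le. intros i _. destruct (S i) eqn:Si.
      + destruct (H1 i Si) as [_ [_ [_ h]]]. lra.
      + lra.
    - rewrite ssum_scal. nra. }
  assert (NG1 : forall i u, V i u -> phi u < 1/2).
  { intros i u Vu. apply Rnot_le_lt; intro h. apply NG.
    exists (fun j => Nat.eqb j i), (S i), (fun _ => u). split.
    - intros j hj. destruct (Nat.eqb_spec j i); [subst; split; [lia| apply Vu]| discriminate].
    - rewrite (ssum_single (fun _ => phi u)). rewrite (ssum_single (fun j => phi (u - u0 j))).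
      destruct Vu as [_ [h1 _]]. lra. }
  apply is_lim_spec in Hp. destruct (Hp beta) as [M HM].
  assert (Hc0 : forall i, exists co : option R,
     (forall u, above co u -> phi (u - u0 i) < beta -> beta * phi u <= phi (u - u0 i)) /\
     (F i = true -> co = Some (M + u0 i)) /\
     (F i = false -> co = None \/ exists s, co = Some s /\
        forall d, 0 < d -> exists u, V i u /\ phi s - d < phi u)).
  { intros i. destruct (F i) eqn:Fi.
    - exists (Some (M + u0 i)). split; [|split; [auto| discriminate]].
      simpl; intros u Hu h; exfalso. specialize (HM (u - u0 i) ltac:(lra)). lra.
    - destruct (classic (exists u, V i u)) as [Hex|Hn].
      + destruct (completeness (V i)) as [s Hs]; auto.
        { exists (M + u0 i). intros x [_ [h _]]. apply Rnot_lt_le; intro.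
          specialize (HM (x - u0 i) ltac:(lra)). lra. }
        exists (Some s). split.
        { intros u Hu h; apply Rnot_lt_le; intro h'. simpl in Hu.
          destruct Hs as [Hub _]. specialize (Hub u (conj Fi (conj h h'))). lra. }
        split; [discriminate|]. intros _; right; exists s; split; auto.
        apply (phi_lc phi Hphi); auto.
      + exists None. split.
        { intros u _ h; apply Rnot_lt_le; intro h'; apply Hn; exists u; repeat split; auto. }
        split; [discriminate| auto]. }
  apply choice in Hc0. destruct Hc0 as [c Hc].
  assert (Hext : forall i, 0 <= phi_ext phi (c i)).
  { intros i; destruct (c i); simpl; auto; lra. }
  set (k := fun i => if F i then 0 else phi_ext phi (c i)).
  assert (C : forall N, ssum k N <= 1).
  { intros N. apply Rnot_lt_le; intro HN.
    set (d := / (2 * (INR N + 1))).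
    assert (HN0 := pos_INR N).
    assert (dpos : 0 < d) by (unfold d; apply Rinv_0_lt_compat; lra).
    assert (Nd : INR N * d <= 1/2).
    { unfold d. apply Rmult_le_reg_r with (2 * (INR N + 1)); [lra|].
      rewrite Rmult_assoc, Rinv_l; lra. }
    assert (Hu : forall i, exists u, (F i = false -> c i <> None ->
                  V i u /\ phi_ext phi (c i) - d < phi u)).
    { intros i. destruct (F i) eqn:Fi. exists 0; discriminate.
      destruct (Hc i) as [_ [_ H3]]. destruct (H3 Fi) as [h|[s [hs hh]]].
      exists 0; intros _ h'; contradiction.
      destruct (hh d dpos) as [u [Vu Hu]]; exists u; intros; rewrite hs; simpl; auto. }
    apply choice in Hu. destruct Hu as [uu Huu].
    set (Sb := fun i => negb (F i) && (match c i with Some _ => true | None => false end)).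
    set (a := fun i => if Sb i then phi (uu i) else 0).
    assert (HSb : forall i, Sb i = true -> V i (uu i) /\ phi_ext phi (c i) - d < phi (uu i)).
    { intros i h. unfold Sb in h. apply andb_prop in h. destruct h as [h1 h2].
      apply Huu. destruct (F i); auto; discriminate. destruct (c i); congruence. }
    assert (Ha : ssum k N - INR N * d <= ssum a N).
    { apply ssum_delta. intros i _. unfold k, a. destruct (Sb i) eqn:Si.
      - destruct (HSb i Si) as [[Fi _] h]. rewrite Fi. lra.
      - unfold Sb in Si. destruct (F i); simpl in Si. lra. destruct (c i); simpl; [discriminate| lra]. }
    destruct (greedy a N) as [K HK].
    { intros i; unfold a; destruct (Sb i); auto; lra. }
    { intros i; unfold a; destruct (Sb i) eqn:Si; [| lra]. apply (NG1 i). apply HSb; auto. }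
    { lra. }
    apply (NG2 (fun i => Sb i && Nat.ltb i K) K uu).
    - intros i h. apply andb_prop in h. destruct h as [h1 h2]. split.
      apply Nat.ltb_lt; auto. apply HSb; auto.
    - rewrite (ssum_ext _ a). lra. intros i hi. unfold a.
      apply Nat.ltb_lt in hi. rewrite hi. destruct (Sb i); auto. }
  apply Hno. exists beta, beta, c. split; [lra| split; [lra| split]].
  - set (h := fun i => if F i then phi (M + u0 i) else 0).
    assert (Hbd : Rbar_le (nnsum (fun i => phi_ext phi (c i))) (Finite (ssum h NF + 1))).
    { unfold nnsum. rewrite <- (Lim_seq_const (ssum h NF + 1)). apply Lim_seq_le_loc.
      exists O. intros n _. rewrite sum_n_ssum.
      apply Rle_trans with (ssum (fun i => h i + k i) (S n)).
      - apply ssum_le. intros i _. unfold h, k. destruct (F i) eqn:Fi.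
        + destruct (Hc i) as [_ [H2 _]]. rewrite (H2 Fi). simpl; lra.
        + lra.
      - rewrite ssum_add. pose proof (C (S n)).
        assert (ssum h (S n) <= ssum h NF); [|lra].
        apply ssum_trunc.
        + intros i; unfold h; destruct (F i); auto; lra.
        + intros i hi; unfold h; destruct (F i) eqn:Fi; auto. specialize (HF i Fi); lia. }
    destruct (nnsum (fun i => phi_ext phi (c i))); simpl in *; auto.
  - intros i u. destruct (Hc i) as [H1 _]. apply H1.
Qed.

Definition stf (g : (nat->bool)*nat -> nat -> (nat->bool)*nat*(nat->R)) :
  nat -> (nat->bool)*nat :=
  fix st n := match n with
  | O => (fun _ => false, O)
  | S k => let p := st k in let q := g p k in
      ((fun i => fst p i || fst (fst q) i), Nat.max (snd p) (snd (fst q)))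
  end.

Theorem mainTheorem10 (phi : R -> R) (u0 : nat -> R)
  (Hphi : deformed_exp phi)
  (Hu0 : forall i, 0 < u0 i)
  (Hno : ~ exists (alpha eps : R) (c : nat -> option R),
           0 < alpha < 1 /\ 0 < eps /\
           Rbar_lt (nnsum (fun i => phi_ext phi (c i))) p_infty /\
           forall i u, above (c i) u -> phi (u - u0 i) < eps ->
             alpha * phi u <= phi (u - u0 i)) :
  exists (A : nat -> nat -> bool) (c : nat -> nat -> R),
    (forall n m i, (1 <= n)%nat -> (1 <= m)%nat -> n <> m ->
        A n i = true -> A m i = false) /\
    (forall n, (1 <= n)%nat ->
       Rbar_le (Finite (1 / 2))
         (nnsum (fun i => if A n i then phi (c n i) else 0)) /\
       Rbar_le (nnsum (fun i => if A n i then phi (c n i - u0 i) else 0))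
         (Finite (/ 2 ^ n))).
Proof.
  assert (mainE : forall (p : (nat->bool)*nat) (n : nat), exists q : (nat->bool)*nat*(nat->R),
    (forall i, fst p i = true -> (i < snd p)%nat) ->
    (forall i, fst (fst q) i = true -> (i < snd (fst q))%nat /\ fst p i = false) /\
    1/2 <= ssum (fun i => if fst (fst q) i then phi (snd q i) else 0) (snd (fst q)) /\
    ssum (fun i => if fst (fst q) i then phi (snd q i - u0 i) else 0) (snd (fst q))
      <= / 2 ^ (S n)).
  { intros [F NF] n. destruct (classic (forall i, F i = true -> (i < NF)%nat)) as [HF|HF].
    - assert (Hb : 0 < / 2 ^ (S n) < 1).
      { split. apply Rinv_0_lt_compat, pow_lt; lra.
        rewrite <- Rinv_1. apply Rinv_lt_contravar. rewrite Rmult_1_l; apply pow_lt; lra.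
        simpl. pose proof (pow_R1_Rle 2 n ltac:(lra)). lra. }
      destruct (main_step phi u0 Hphi Hno F NF _ HF Hb) as [Sb [N [c H]]].
      exists (Sb, N, c). intros _. exact H.
    - exists (fun _ => false, O, fun _ => 0). intros h; exfalso; auto. }
  assert (mainE2 : forall pn : ((nat->bool)*nat)*nat, exists q : (nat->bool)*nat*(nat->R),
    (forall i, fst (fst pn) i = true -> (i < snd (fst pn))%nat) ->
    (forall i, fst (fst q) i = true -> (i < snd (fst q))%nat /\ fst (fst pn) i = false) /\
    1/2 <= ssum (fun i => if fst (fst q) i then phi (snd q i) else 0) (snd (fst q)) /\
    ssum (fun i => if fst (fst q) i then phi (snd q i - u0 i) else 0) (snd (fst q))
      <= / 2 ^ (S (snd pn))).
  { intros [p n]. apply mainE. }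
  apply choice in mainE2. destruct mainE2 as [g0 Hg0].
  set (g := fun p k => g0 (p, k)).
  assert (Hg : forall p n, (forall i, fst p i = true -> (i < snd p)%nat) ->
    (forall i, fst (fst (g p n)) i = true -> (i < snd (fst (g p n)))%nat /\ fst p i = false) /\
    1/2 <= ssum (fun i => if fst (fst (g p n)) i then phi (snd (g p n) i) else 0) (snd (fst (g p n))) /\
    ssum (fun i => if fst (fst (g p n)) i then phi (snd (g p n) i - u0 i) else 0) (snd (fst (g p n)))
      <= / 2 ^ (S n)).
  { intros p n. exact (Hg0 (p, n)). }
  clearbody g. clear mainE Hg0.
  set (A := fun n i => fst (fst (g (stf g n) n)) i).
  set (c := fun n i => snd (g (stf g n) n) i).
  assert (inv : forall n i, fst (stf g n) i = true -> (i < snd (stf g n))%nat).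
  { induction n; simpl; intros i h; [discriminate|].
    apply orb_true_iff in h. destruct h as [h|h].
    - specialize (IHn i h). lia.
    - destruct (Hg (stf g n) n IHn) as [H1 _]. destruct (H1 i h). lia. }
  assert (cont : forall m n i, (n < m)%nat -> A n i = true -> fst (stf g m) i = true).
  { induction m; intros n i hnm h; [lia|]. simpl. apply orb_true_iff.
    destruct (Nat.eq_dec n m); [subst; right; exact h| left; apply (IHm n); auto; lia]. }
  assert (disj : forall n m i, (n < m)%nat -> A n i = true -> A m i = false).
  { intros n m i hnm h. destruct (A m i) eqn:Am; auto.
    destruct (Hg (stf g m) m (inv m)) as [H1 _]. destruct (H1 i Am) as [_ H2].
    rewrite (cont m n i hnm h) in H2. discriminate. }
  exists A, c. split.
  - intros n m i _ _ hnm h. destruct (Nat.lt_gt_cases n m) as [[l|l] _].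
    + auto.
    + apply disj with n; auto.
    + destruct (A m i) eqn:Am; auto.
      pose proof (disj m n i l Am). congruence.
  - intros n _. destruct (Hg (stf g n) n (inv n)) as [H1 [H2 H3]].
    set (N := snd (fst (g (stf g n) n))) in *.
    assert (Hz : forall (f : nat -> R) i, (N <= i)%nat -> (if A n i then f i else 0) = 0).
    { intros f i hi. unfold A. destruct (fst (fst (g (stf g n) n)) i) eqn:E; auto.
      destruct (H1 i E). lia. }
    rewrite (nnsum_fin _ N (fun i => Hz (fun i => phi (c n i)) i)).
    rewrite (nnsum_fin _ N (fun i => Hz (fun i => phi (c n i - u0 i)) i)).
    simpl. split; [exact H2|].
    apply Rle_trans with (/ 2 ^ S n); [exact H3|].
    apply Rinv_le_contravar. apply pow_lt; lra. simpl.
    pose proof (pow_lt 2 n ltac:(lra)). lra.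
Qed.
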